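(* Let $L\in\mathbb{N}_+$ and $n_0,n_1,\dots,n_L\in\mathbb{N}_+$. Define the binomial bound $$\beta=\big\|B_{n_L}M_{n_{L-1},n_L}\cdots B_{n_1}M_{n_0,n_1}e_{n_0+1}\big\|_1$$ and the Montúfar bound $\mu=\prod_{l=1}^{L}\sum_{j=0}^{\min(n_0,\dots,n_{l-1})}\binom{n_l}{j}$. Then $\beta\le\mu$, and $\beta<\mu$ if and only if there exists $l\in\{1,\dots,L-1\}$ with $n_l<\min(n_0,\dots,n_l)+\min(n_0,\dots,n_{l+1})$.
   Context: $V$ denotes sequences $(v_j)_{j\in\mathbb{N}}$ (indexed from $0$) of nonnegative integers with finite sum; ${\rm e}_k\in V$ has $({\rm e}_k)_j=\delta_{kj}$. Clipping: $\mathrm{cl}_{i^*}(v)_i=v_i$ for $i<i^*$, $\sum_{j\ge i^*}v_j$ for $i=i^*$, $0$ for $i>i^*$. For $n\in\mathbb{N}_+$, $k\in\{0,\dots,n\}$ let $\gamma_{k,n}=\sum_{j=0}^{k}\binom{n}{j}{\rm e}_{n-j}$, and let $B_n\in\mathbb{N}^{(n+1)\times(n+1)}$ be given by $(B_n)_{a,b}=(\mathrm{cl}_{b-1}(\gamma_{b-1,n}))_{a-1}$, $a,b\in\{1,\dots,n+1\}$. For $n,n'\in\mathbb{N}$, the connector matrix $M_{n,n'}\in\mathbb{R}^{(n'+1)\times(n+1)}$ has entries $(M_{n,n'})_{a,b}=\delta_{a,\min(b,n'+1)}$. $e_{n_0+1}\in\mathbb{R}^{n_0+1}$ is the standard unit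 vector with $1$ in the last position; $\|\cdot\|_1$ is the sum of absolute values of entries. *)

(* Defs.v *)
From mathcomp Require Import all_boot all_order all_algebra.
Set Implicit Arguments. Unset Strict Implicit. Unset Printing Implicit Defensive.
Import GRing.Theory Num.Theory.

(* Elements of V (finitely supported nat sequences indexed from 0) are
   represented by finite lists; entries beyond the list are 0. *)
Definition V := seq nat.
Definition vat (v : V) (i : nat) : nat := nth 0%N v i.
Definition vadd (u v : V) : V :=
  mkseq (fun i => vat u i + vat v i)%N (maxn (size u) (size v)).
Definition vscale (c : nat) (v : V) : V := map (muln c) v.
Definition ev (k : nat) : V := rcons (nseq k 0%N) 1%N.
Definition clip (istar : nat) (v : V) : V :=
  mkseq (fun i => if (i < istar)%N then vat v i
                  else if i == istar then (\sum_(istar <= j < size v) vat v j)%N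
                  else 0%N) istar.+1.
Definition gamma (k n : nat) : V :=
  \big[vadd/[::]]_(j < k.+1) vscale 'C(n, j) (ev (n - j)).

Local Open Scope ring_scope.
(* B_n, 0-based indices: (B_n)_{a,b} = (cl_b(gamma_{b,n}))_a *)
Definition Bmx (n : nat) : 'M[int]_(n.+1) :=
  \matrix_(a < n.+1, b < n.+1) ((vat (clip b (gamma b n)) a)%:Z).
Definition Mmx (n n' : nat) : 'M[int]_(n'.+1, n.+1) :=
  \matrix_(a < n'.+1, b < n.+1) ((nat_of_ord a == minn b n')%:R).

(* v_0 = e_{n_0+1}; v_l = B_{n_l} M_{n_{l-1},n_l} v_{l-1} *)
Fixpoint bvec (ns : nat -> nat) (l : nat) : 'cV[int]_((ns l).+1) :=
  match l return 'cV[int]_((ns l).+1) with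
  | 0 => delta_mx ord_max 0
  | l'.+1 => Bmx (ns l'.+1) *m Mmx (ns l') (ns l'.+1) *m bvec ns l'
  end.

Definition beta (ns : nat -> nat) (L : nat) : nat :=
  (\sum_(i < (ns L).+1) absz (bvec ns L i ord0))%N.

Definition minpre (ns : nat -> nat) (l : nat) : nat :=
  \big[minn/ns 0%N]_(i < l.+1) ns i.

Definition mu (ns : nat -> nat) (L : nat) : nat :=
  (\prod_(1 <= l < L.+1) \sum_(j < (minpre ns l.-1).+1) 'C(ns l, j))%N.

(* Main.v *)
Require Import Defs.
From mathcomp Require Import all_boot all_order all_algebra.
From mathcomp Require Import zify.
Set Implicit Arguments. Unset Strict Implicit. Unset Printing Implicit Defensive.


Lemma vat_vadd u v i : vat (vadd u v) i = vat u i + vat v i.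
Proof.
rewrite /vat /vadd; case: (ltnP i (maxn (size u) (size v))) => h.
  by rewrite nth_mkseq.
rewrite !nth_default ?size_mkseq //; move: h; rewrite geq_max => /andP[] //.
Qed.

Lemma vat_vscale c v i : vat (vscale c v) i = c * vat v i.
Proof.
rewrite /vat /vscale; case: (ltnP i (size v)) => h.
  by rewrite (nth_map 0).
by rewrite !nth_default ?size_map // muln0.
Qed.

Lemma vat_ev k i : vat (ev k) i = (i == k).
Proof.
rewrite /vat /ev nth_rcons size_nseq nth_nseq; case: (ltnP i k) => h.
  by have -> : (i == k) = false by lia.
by case: eqP.
Qed.

Lemma vat_nil i : vat [::] i = 0.
Proof. by rewrite /vat nth_nil. Qed.

Lemma vat_gamma b n i :
  vat (gamma b n) i = \sum_(j < b.+1) 'C(n, j) * (i == n - j).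
Proof.
rewrite /gamma (big_morph (fun v => vat v i) (fun u v => vat_vadd u v i) (vat_nil i)).
by apply: eq_bigr => j _; rewrite vat_vscale vat_ev.
Qed.

Lemma size_gamma b n : size (gamma b n) = n.+1.
Proof.
rewrite /gamma big_ord_recl /= {1}/vadd size_mkseq /vscale size_map /ev size_rcons size_nseq subn0.
apply/maxn_idPl.
elim/big_ind: _ => //.
- by move=> x y; rewrite /vadd size_mkseq geq_max => -> ->.
- by move=> j _; rewrite size_map size_rcons size_nseq; lia.
Qed.

Lemma vat_clip b v a : vat (clip b v) a =
  if a < b then vat v a else if a == b then \sum_(b <= j < size v) vat v j else 0.
Proof.
rewrite /clip /vat; case: (ltnP a b.+1) => h.
  by rewrite nth_mkseq.
rewrite nth_default ?size_mkseq //.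
have -> : (a < b) = false by lia.
by have -> : (a == b) = false by lia.
Qed.

Lemma sumn_vat s K : size s <= K -> sumn s = \sum_(i < K) vat s i.
Proof.
elim: s K => [|x s IH] K /=.
  by move=> _; rewrite big1 // => i _; rewrite vat_nil.
case: K => // K hK; rewrite big_ord_recl /= (IH K) //.
Qed.

Lemma sumn_vadd u v : sumn (vadd u v) = sumn u + sumn v.
Proof.
rewrite (sumn_vat (K := maxn (size u) (size v))); last by rewrite /vadd size_mkseq.
rewrite (sumn_vat (K := maxn (size u) (size v)) (s := u)) ?leq_maxl //.
rewrite (sumn_vat (K := maxn (size u) (size v)) (s := v)) ?leq_maxr //.
by rewrite -big_split; apply: eq_bigr => i _; rewrite vat_vadd.
Qed.

Lemma sumn_vscale c v : sumn (vscale c v) = c * sumn v.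
Proof. by elim: v => [|x v IH] /=; rewrite ?muln0 // IH mulnDr. Qed.

Lemma sumn_ev k : sumn (ev k) = 1.
Proof. by elim: k. Qed.

Definition S n k := \sum_(j < k.+1) 'C(n, j).

Lemma sumn_gamma b n : sumn (gamma b n) = S n b.
Proof.
rewrite /gamma (big_morph sumn sumn_vadd (erefl 0 : sumn [::] = 0)).
by apply: eq_bigr => j _; rewrite sumn_vscale sumn_ev muln1.
Qed.

Lemma sumn_clip b v : b <= size v -> sumn (clip b v) = sumn v.
Proof.
move=> hb.
rewrite (sumn_vat (K := b.+1)); last by rewrite /clip size_mkseq.
rewrite (sumn_vat (K := size v)) //.
rewrite big_ord_recr /= vat_clip ltnn eqxx.
transitivity (\sum_(i < b) vat v i + \sum_(b <= j < size v) vat v j).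
  by congr (_ + _); apply: eq_bigr => i _; rewrite vat_clip ltn_ord.
by rewrite -(big_mkord xpredT (fun i => vat v i)) -[RHS](big_mkord xpredT) -(big_cat_nat _ (n:=b)).
Qed.

Definition G n b a := vat (clip b (gamma b n)) a.

Lemma colsum n b : b <= n -> \sum_(a < n.+1) G n b a = S n b.
Proof.
move=> hb; rewrite /G -sumn_vat; last by rewrite /clip size_mkseq.
rewrite sumn_clip ?sumn_gamma // size_gamma; lia.
Qed.

Lemma sum_gt0_ex n (F : 'I_n -> nat) : 0 < \sum_(i < n) F i -> exists i, 0 < F i.
Proof.
case: (pickP (fun i => 0 < F i)) => [i hi|none] h; first by exists i.
by rewrite big1 in h => // i _; move: (none i) => /= e; lia.
Qed.

Lemma le_sum_term n (F : 'I_n -> nat) i : F i <= \sum_(j < n) F j.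
Proof. by rewrite (bigD1 i) //= leq_addr. Qed.

Lemma le_sum_nat_term m k (F : nat -> nat) i : m <= i < k -> F i <= \sum_(m <= j < k) F j.
Proof.
move=> /andP[h1 h2]; rewrite (big_cat_nat _ (n := i)) //; last exact: ltnW.
by rewrite [X in _ <= _ + X]big_ltn //= addnCA leq_addr.
Qed.

Lemma G_supp n b a : 0 < G n b a -> a <= b /\ (a = b \/ n - b <= a).
Proof.
rewrite /G vat_clip; case: (ltnP a b) => h1.
  rewrite vat_gamma => /sum_gt0_ex [j]; rewrite muln_gt0 => /andP[_ /eqP e].
  have := ltn_ord j; lia.
by case: eqP => // ->; split; [|left].
Qed.

Lemma G_diag n b : b <= n -> 0 < G n b b.
Proof.
move=> hb; rewrite /G vat_clip ltnn eqxx size_gamma.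
have h := le_sum_nat_term (fun j => vat (gamma b n) j) (m := b) (k := n.+1) (i := n).
apply: leq_trans (h _); first last.
  by apply/andP; split.
rewrite vat_gamma.
have h2 := le_sum_term (fun j : 'I_b.+1 => 'C(n, j) * (n == n - j)) ord0.
apply: leq_trans h2.
by rewrite bin0 subn0 eqxx.
Qed.

Lemma G_low n b : b <= n -> 0 < G n b (minn (n - b) b).
Proof.
move=> hb; case: (ltnP (n - b) b) => h.
  rewrite /G vat_clip h vat_gamma.
  apply: leq_trans (le_sum_term _ (Ordinal (ltnSn b))).
  by rewrite /= eqxx muln1 bin_gt0.
exact: G_diag.
Qed.

Lemma S_mono n k k' : k <= k' -> S n k <= S n k'.
Proof.
move=> h; rewrite /S -!(big_mkord xpredT (fun j => 'C(n, j))).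
rewrite (big_cat_nat _ (n := k.+1) (p := k'.+1)) //=; first exact: leq_addr.
Qed.

Lemma S_min n k : S n (minn k n) = S n k.
Proof.
case: (leqP k n) => h; first by [].
rewrite /S -!(big_mkord xpredT (fun j => 'C(n, j))).
rewrite [RHS](big_cat_nat _ (n := n.+1)) //=; last by lia.
rewrite [X in _ = _ + X]big1_seq ?addn0 // => j /andP[_]; rewrite mem_iota => hj.
by rewrite bin_small //; lia.
Qed.

Lemma S_strict n c k : c < k -> c < n -> S n c < S n k.
Proof.
move=> h1 h2; apply: leq_trans (S_mono n h1).
rewrite /S [X in _ < X]big_ord_recr.
rewrite -[X in X < _]addn0 ltn_add2l bin_gt0 //.
Qed.

Lemma S_pos n k : 0 < S n k.
Proof. by rewrite /S big_ord_recl bin0. Qed.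

Lemma big_minn_shift (r : seq nat) (F : nat -> nat) x a :
  \big[minn/minn a x]_(j <- r) F j = minn (\big[minn/x]_(j <- r) F j) a.
Proof.
elim: r => [|j r IH]; rewrite ?big_nil ?big_cons ?IH /=; lia.
Qed.

Lemma minpre0 ns : minpre ns 0 = ns 0.
Proof. by rewrite /minpre -(big_mkord xpredT) /index_iota /= big_cons big_nil /= minnn. Qed.

Lemma minpreS ns l : minpre ns l.+1 = minn (minpre ns l) (ns l.+1).
Proof.
rewrite /minpre -!(big_mkord xpredT ns) /index_iota !subn0.
have -> : iota 0 l.+2 = rcons (iota 0 l.+1) l.+1 by rewrite -cats1 -[l.+2]addn1 iotaD.
by rewrite big_rcons_op /= big_minn_shift.
Qed.

Lemma minpre_le ns l : minpre ns l <= ns l.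
Proof. by case: l => [|l]; [rewrite minpre0 | rewrite minpreS geq_minr]. Qed.

Fixpoint W (ns : nat -> nat) (l : nat) : nat -> nat :=
  match l with
  | 0 => fun i => nat_of_bool (i == ns 0)
  | l'.+1 => fun a => \sum_(c < (ns l').+1) G (ns l'.+1) (minn c (ns l'.+1)) a * W ns l' c
  end.

Module CPart.
Import GRing.Theory Num.Theory.
Local Open Scope ring_scope.

Lemma sum_pick (m k : nat) (F : nat -> int) : (k < m)%N ->
  \sum_(b < m) F b * ((b : nat) == k)%:R = F k.
Proof.
move=> hk; rewrite (bigD1 (Ordinal hk)) //= eqxx mulr1 big1 ?addr0 // => b nb.
have -> : ((b : nat) == k) = false.
  by apply/negbTE; apply: contra nb => /eqP e; apply/eqP; apply: val_inj.
by rewrite mulr0.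
Qed.

Lemma bvec_rec ns l (a : 'I_(ns l.+1).+1) :
  bvec ns l.+1 a ord0 = \sum_(c < (ns l).+1)
     (G (ns l.+1) (minn c (ns l.+1)) a)%:Z * bvec ns l c ord0.
Proof.
rewrite /= mxE; apply: eq_bigr => c _; rewrite mxE; congr (_ * _).
under eq_bigr => b _ do rewrite !mxE.
by rewrite (sum_pick (fun b => (G (ns l.+1) b a)%:Z)) //; rewrite ltnS geq_minr.
Qed.

Lemma bvecW ns l (i : 'I_(ns l).+1) : bvec ns l i ord0 = (W ns l i)%:Z.
Proof.
elim: l i => [|l IH] i.
  by rewrite /= mxE /=; case: eqP => [->|ne] /=; [rewrite eqxx | case: eqP => // e; case: ne; apply: val_inj].
rewrite bvec_rec /= (big_morph Posz PoszD (erefl (Posz 0))).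
by apply: eq_bigr => c _; rewrite IH PoszM.
Qed.

Lemma betaW ns L : beta ns L = (\sum_(i < (ns L).+1) W ns L i)%N.
Proof. by rewrite /beta; apply: eq_bigr => i _; rewrite bvecW. Qed.

End CPart.
Import CPart.

Section Main.
Variable ns : nat -> nat.
Local Notation m := (minpre ns).
Local Notation W := (W ns).

Definition T l := \sum_(p < (ns l).+1) W l p.
Definition P l := \prod_(1 <= k < l.+1) S (ns k) (m k.-1).

Lemma W0 p : W 0 p = (p == ns 0).
Proof. by []. Qed.

Lemma WS l a : W l.+1 a =
  \sum_(c < (ns l).+1) G (ns l.+1) (minn c (ns l.+1)) a * W l c.
Proof. by []. Qed.

Lemma W_supp l p : 0 < W l p -> p <= m l.
Proof.
elim: l p => [|l IH] p.
  by rewrite W0 minpre0; case: eqP => // ->.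
rewrite WS => /sum_gt0_ex [c]; rewrite muln_gt0 => /andP[/G_supp [h1 _] /IH h2].
rewrite minpreS; lia.
Qed.

Lemma T_rec l : T l.+1 =
  \sum_(c < (ns l).+1) W l c * S (ns l.+1) (minn c (ns l.+1)).
Proof.
rewrite /T; under eq_bigr => a _ do rewrite WS.
rewrite exchange_big /=; apply: eq_bigr => c _.
by rewrite -big_distrl /= colsum ?geq_minr // mulnC.
Qed.

Lemma step_le l : T l.+1 <= S (ns l.+1) (m l) * T l.
Proof.
rewrite T_rec /T big_distrr /=; apply: leq_sum => c _.
case: (posnP (W l c)) => [->|hW]; first by rewrite !muln0 mul0n.
rewrite mulnC leq_pmul2r //; apply: S_mono.
have := W_supp hW; lia.
Qed.

Lemma step_eq l : (forall c : 'I_(ns l).+1, 0 < W l c -> m l.+1 <= c) ->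
  T l.+1 = S (ns l.+1) (m l) * T l.
Proof.
move=> H; rewrite T_rec /T big_distrr /=; apply: eq_bigr => c _.
case: (posnP (W l c)) => [->|hW]; first by rewrite !muln0 mul0n.
rewrite mulnC; congr (_ * _).
have h1 := H c hW; have h2 := W_supp hW.
have h3 := minpreS ns l; have h4 := minpre_le ns l.+1.
rewrite -[RHS]S_min; congr S; lia.
Qed.

Lemma sum_lt n (F G : 'I_n -> nat) i0 : (forall i, F i <= G i) -> F i0 < G i0 ->
  \sum_(i < n) F i < \sum_(i < n) G i.
Proof.
move=> hle hlt; rewrite (bigD1 i0) //= [X in _ < X](bigD1 i0) //=.
have : \sum_(i < n | i != i0) F i <= \sum_(i < n | i != i0) G i.
  by apply: leq_sum => i _; exact: hle.
exact: (leq_add hlt).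
Qed.

Lemma step_lt l (c : 'I_(ns l).+1) : 0 < W l c -> c < m l.+1 ->
  T l.+1 < S (ns l.+1) (m l) * T l.
Proof.
move=> hW hc; rewrite T_rec /T big_distrr /=; apply: (sum_lt (i0 := c)).
  move=> c'; case: (posnP (W l c')) => [->|hW']; first by rewrite !muln0 mul0n.
  rewrite mulnC leq_pmul2r //; apply: S_mono.
  have := W_supp hW'; lia.
rewrite mulnC ltn_pmul2r //.
have h3 := minpreS ns l; have h4 := minpre_le ns l.+1.
have -> : minn c (ns l.+1) = c by lia.
apply: S_strict; lia.
Qed.

Lemma T0 : T 0 = 1.
Proof.
rewrite /T (bigD1 ord_max) //= eqxx big1 // => p hp.
case: eqP => // e; case/eqP: hp; apply: val_inj; exact: e.
Qed.

Lemma P0 : P 0 = 1.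
Proof. by rewrite /P big_geq. Qed.

Lemma PS l : P l.+1 = P l * S (ns l.+1) (m l).
Proof. by rewrite /P big_nat_recr. Qed.

Lemma T_le l : T l <= P l.
Proof.
elim: l => [|l IH]; first by rewrite T0 P0.
rewrite PS; apply: leq_trans (step_le l) _.
by rewrite mulnC leq_pmul2r // S_pos.
Qed.

Definition Q l := exists k, k < l /\ exists c, [/\ c < (ns k).+1, 0 < W k c & c < m k.+1].

Lemma T_lt l : T l < P l <-> Q l.
Proof.
elim: l => [|l IH].
  by rewrite T0 P0; split => // [[k [//]]].
have Spos := S_pos (ns l.+1) (m l).
split.
- move=> hlt.
  case: (ltnP (T l) (P l)) => hTl.
    by case: (IH.1 hTl) => k [hk hc]; exists k; split => //; apply: ltnW.
  have eTl : T l = P l by apply/eqP; rewrite eqn_leq T_le.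
  case: (boolP [exists c : 'I_(ns l).+1, (0 < W l c) && (c < m l.+1)]).
    by move=> /existsP [c /andP[h1 h2]]; exists l; split => //; exists c; split.
  move=> hne; move: hlt; rewrite step_eq.
    by rewrite eTl PS mulnC ltnn.
  move=> c hc; rewrite leqNgt; apply/negP => hc'; case/existsP: hne; exists c.
  by rewrite hc hc'.
- move=> [k [hk [c [hc1 hc2 hc3]]]].
  rewrite PS; case: (ltnP k l) => hkl.
    have hTl : T l < P l by apply: IH.2; exists k; split => //; exists c; split.
    apply: leq_ltn_trans (step_le l) _.
    by rewrite [X in _ < X]mulnC ltn_pmul2l.
  have ekl : k = l by lia.
  subst k.
  apply: leq_trans (step_lt (c := Ordinal hc1) hc2 hc3) _.
  by rewrite mulnC leq_pmul2r // T_le.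
Qed.

Lemma W_top l : 0 < W l (m l).
Proof.
elim: l => [|l IH]; first by rewrite W0 minpre0 eqxx.
have hl : m l < (ns l).+1 by rewrite ltnS minpre_le.
rewrite WS; apply: leq_trans (le_sum_term _ (Ordinal hl)); rewrite /= muln_gt0 IH andbT.
rewrite -minpreS; apply: G_diag; exact: minpre_le.
Qed.

Lemma W_low l : 0 < W l.+1 (minn (ns l.+1 - m l.+1) (m l.+1)).
Proof.
have hl : m l < (ns l).+1 by rewrite ltnS minpre_le.
rewrite WS; apply: leq_trans (le_sum_term _ (Ordinal hl)); rewrite /= muln_gt0 W_top andbT.
rewrite -minpreS; apply: G_low; exact: minpre_le.
Qed.

Lemma D_step k c : 0 < W k.+1 c -> c < m k.+2 ->
  (exists c', 0 < W k c' /\ c' < m k.+1) \/ ns k.+1 < m k.+1 + m k.+2.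
Proof.
rewrite WS => /sum_gt0_ex [c']; rewrite muln_gt0 => /andP[/G_supp [h1 h1'] hW] hc.
have h2 := W_supp hW.
case: (ltnP c' (m k.+1)) => hc'; first by left; exists c'.
right.
have h3 := minpreS ns k; have h4 := minpreS ns k.+1.
have h5 := minpre_le ns k.+1; have h6 := minpre_le ns k.+2.
lia.
Qed.

Lemma D k c : 0 < W k.+1 c -> c < m k.+2 ->
  exists l', [/\ 1 <= l', l' <= k.+1 & ns l' < m l' + m l'.+1].
Proof.
elim: k c => [|k IH] c hW hc.
  case: (D_step hW hc) => [[c' [hW' hc']]|h]; last by exists 1.
  move: hW'; rewrite W0; case: eqP => // e _.
  move: hc'; rewrite e minpreS minpre0; lia.
case: (D_step hW hc) => [[c' [hW' hc']]|h]; last by exists k.+2.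
by case: (IH c' hW' hc') => l' [h1 h2 h3]; exists l'; split => //; apply: leqW.
Qed.

Lemma Q_char L : 0 < L -> Q L <->
  exists l, [/\ 1 <= l, l <= L.-1 & ns l < m l + m l.+1].
Proof.
move=> hL; split.
- move=> [k [hk [c [hc1 hc2 hc3]]]].
  case: k hk hc1 hc2 hc3 => [|k] hk hc1 hc2 hc3.
    move: hc2; rewrite W0; case: eqP => // e _.
    move: hc3; rewrite e minpreS minpre0; lia.
  case: (D hc2 hc3) => l' [h1 h2 h3]; exists l'; split => //; lia.
- move=> [l [h1 h2 h3]].
  case: l h1 h2 h3 => [//|l] _ h2 h3.
  exists l.+1; split; first by lia.
  exists (minn (ns l.+1 - m l.+1) (m l.+1)); split.
  + have := minpre_le ns l.+1; lia.
  + exact: W_low.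
  + have := minpre_le ns l.+1; lia.
Qed.

End Main.


Theorem mainTheorem12 (L : nat) (ns : nat -> nat) :
  (0 < L)%N -> (forall l, (l <= L)%N -> (0 < ns l)%N) ->
  (beta ns L <= mu ns L)%N /\
  ((beta ns L < mu ns L)%N <->
   exists l, [/\ (1 <= l)%N, (l <= L.-1)%N &
                 (ns l < minpre ns l + minpre ns l.+1)%N]).
Proof.
move=> hL _.
have eb : beta ns L = T ns L by rewrite betaW.
have em : mu ns L = P ns L by [].
rewrite eb em; split; first exact: T_le.
rewrite T_lt; exact: Q_char.
Qed.
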